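(* Let $\mu$ be a non-uniform Bernoulli measure on $\Sigma=\{1,\dots,K\}^{\mathbb N}$ and let $g:\mathbb N\to[1,\infty)$ be a function with $\limsup_{n\to\infty}\frac{g(n)}{\sqrt{\log\log n}}\le1$ and $\lim_{n\to\infty}g(n)=\infty$. Then there exists a sequence of positive integers $(n_k)_{k\ge1}$ such that $$\mu\left(\left\{\mathbf i\in\Sigma:\limsup_{k\to\infty}\frac{\log\mu([\mathbf i|_1^{n_k}])+h_\mu n_k}{\sqrt{2\rho_\mu n_k}\,g(n_k)}\le\frac12\right\}\right)=1.$$
   Context: Let $K\ge2$ and $\Sigma=\{1,\dots,K\}^{\mathbb N}$. For $\mathbf i\in\Sigma$, $[\mathbf i|_1^n]$ denotes the cylinder of sequences whose first $n$ terms are $i_1,\dots,i_n$. For a probability vector $(p_i)_{i=1}^K$, the Bernoulli measure $\mu$ assigns $[i_1\dots i_n]$ measure $p_{i_1}\cdots p_{i_n}$; it is non-uniform if $p_i\ne1/K$ for some $i$. Entropy $h_\mu=-\sum_ip_i\log p_i$, variance $\rho_\mu=\sum_ip_i(\log p_i)^2-(\sum_ip_i\log p_i)^2$. Convention: $\log x=0$ for $x\le1$. *)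

(* Defs.v *)
From HB Require Import structures.
From mathcomp Require Import all_boot all_order all_algebra.
From mathcomp Require Import all_classical all_reals all_analysis.

Set Implicit Arguments.
Unset Strict Implicit.
Unset Printing Implicit Defensive.

Import Order.TTheory GRing.Theory Num.Theory.
Local Open Scope classical_set_scope.
Local Open Scope ring_scope.

(* Alphabet with K symbols (K >= 1), written 'I_(K.-1).+1 so that it is
   canonically pointed; for K >= 1 this is exactly 'I_K = {0,...,K-1},
   i.e. the symbols {1,...,K} shifted by one. *)
Definition Alph (K : nat) : Type := 'I_(K.-1).+1.
HB.instance Definition _ K := Finite.on (Alph K).
HB.instance Definition _ K := isPointed.Build (Alph K) ord0.

Definition Seqs (K : nat) : Type := nat -> Alph K.

Definition cyl (K : nat) (i : Seqs K) (n : nat) : set (Seqs K) :=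
  [set j | forall m, (m < n)%N -> j m = i m].

Definition cylinders (K : nat) : set (set (Seqs K)) :=
  [set A | exists i n, A = cyl i n].

(* Sigma with the sigma-algebra generated by the cylinders (the Borel
   sigma-algebra of the product topology). *)
Definition Sigma (K : nat) := g_sigma_algebraType (@cylinders K).

(* mu is the Bernoulli measure of the probability vector p: it gives the
   cylinder [i_1...i_n] mass p_{i_1}...p_{i_n}.  (By the pi-lambda theorem
   this determines mu uniquely on the cylinder sigma-algebra.) *)
Definition is_bernoulli {R : realType} (K : nat) (p : Alph K -> R)
  (mu : probability (Sigma K) R) : Prop :=
  forall (i : Sigma K) (n : nat),
    mu (cyl i n) = (\prod_(m < n) p (i m))%:E.

Definition is_prob_vector {R : realType} (K : nat) (p : Alph K -> R) : Prop :=
  (forall a, 0 < p a) /\ \sum_a p a = 1.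

Definition non_uniform {R : realType} (K : nat) (p : Alph K -> R) : Prop :=
  exists a, p a != K%:R^-1.

Definition bern_entropy {R : realType} (K : nat) (p : Alph K -> R) : R :=
  - \sum_a p a * ln (p a).

Definition bern_variance {R : realType} (K : nat) (p : Alph K -> R) : R :=
  \sum_a p a * (ln (p a)) ^+ 2 - (\sum_a p a * ln (p a)) ^+ 2.

(* Convention of the paper: log x = 0 for x <= 1. *)
Definition logc {R : realType} (x : R) : R := if x <= 1 then 0 else ln x.

Definition loglog {R : realType} (n : nat) : R := logc (logc (n%:R : R)).

(* Main.v *)
Require Import Defs.
From HB Require Import structures.
From mathcomp Require Import all_boot all_order all_algebra.
From mathcomp Require Import all_classical all_reals all_analysis.
From mathcomp Require Import ring lra measurable_realfun.
Import Order.TTheory GRing.Theory Num.Theory.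
Local Open Scope classical_set_scope.
Local Open Scope ring_scope.
Set Implicit Arguments.
Unset Strict Implicit.
Lemma cyl_meas K (i : Sigma K) n : measurable (cyl i n : set (Sigma K)).
Proof. apply: sub_gen_smallest; exists i, n. done. Qed.

Definition ext K n (w : {ffun 'I_n -> Alph K}) : Sigma K :=
  fun m => match (insub m : option 'I_n) with Some j => w j | None => ord0 end.

Lemma extE K n (w : {ffun 'I_n -> Alph K}) (j : 'I_n) : ext w j = w j.
Proof. by rewrite /ext valK. Qed.

Lemma ext_agree K n (i : Sigma K) m : (m < n)%N ->
  ext [ffun j : 'I_n => i j] m = i m.
Proof. by move=> mn; rewrite /ext insubT ffunE. Qed.

Definition dep K n (E : set (Sigma K)) := forall i j : Sigma K,
  (forall m, (m < n)%N -> i m = j m) -> E i -> E j.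

Lemma dep_cover K n (E : set (Sigma K)) : dep n E ->
  E = \bigcup_(w in [set w : {ffun 'I_n -> Alph K} | E (ext w)]) cyl (ext w) n.
Proof.
move=> dE; apply/seteqP; split=> [i Ei|i [w /= Ew ci]].
  exists [ffun j : 'I_n => i j] => /=.
    by apply: dE Ei => m mn; rewrite ext_agree.
  by move=> m mn; rewrite ext_agree.
by apply: dE Ew => m mn; rewrite ci.
Qed.

Lemma dep_meas K n (E : set (Sigma K)) : dep n E -> measurable E.
Proof.
move=> dE; rewrite (dep_cover dE); apply: fin_bigcup_measurable.
  exact: finite_finset.
by move=> w _; apply: cyl_meas.
Qed.

Lemma dep_fun_meas K n d' (T' : measurableType d') (f : Sigma K -> T') :
  (forall i j : Sigma K, (forall m, (m < n)%N -> i m = j m) -> f i = f j) ->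
  measurable_fun setT f.
Proof.
move=> df _ B mB; rewrite setTI; apply: (@dep_meas K n) => i j ij /=.
by rewrite (df _ _ ij).
Qed.
Lemma second_moment (R : comRingType) (A : finType) (q X : A -> R) n :
  \sum_a q a = 1 -> \sum_a q a * X a = 0 ->
  \sum_(w : {ffun 'I_n -> A}) (\prod_(m < n) q (w m)) * (\sum_(m < n) X (w m)) ^+ 2
  = n%:R * \sum_a q a * X a ^+ 2.
Proof.
move=> q1 qX0.
pose F (m1 m2 : 'I_n) m a := q a * (if m == m1 then X a else 1) * (if m == m2 then X a else 1).
have key (w : {ffun 'I_n -> A}) m1 m2 :
  (\prod_(m < n) q (w m)) * (X (w m1) * X (w m2)) = \prod_m F m1 m2 m (w m).
  rewrite /F !big_split /=; rewrite mulrA; congr (_ * _ * _).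
    by rewrite -big_mkcond /= big_pred1_eq.
  by rewrite -big_mkcond /= big_pred1_eq.
have inner m1 m2 : \sum_(w : {ffun 'I_n -> A}) \prod_m F m1 m2 m (w m)
   = if m1 == m2 then \sum_a q a * X a ^+ 2 else 0.
  rewrite -(bigA_distr_bigA (fun m a => F m1 m2 m a)) /=.
  rewrite (bigD1 m1) //= {1}/F eqxx.
  case: eqP => [<-|/eqP ne].
    rewrite [\prod_(i < n | i != m1) _]big1 ?mulr1; last first.
      move=> m mn; rewrite /F (negbTE mn).
      by under eq_bigr do rewrite !mulr1.
    by apply: eq_bigr => a _; rewrite -mulrA expr2.
  by under eq_bigr do rewrite mulr1; rewrite qX0 mul0r.
transitivity (\sum_(m1 < n) \sum_(m2 < n) \sum_(w : {ffun 'I_n -> A})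
   \prod_m F m1 m2 m (w m)); last first.
  under eq_bigr do under eq_bigr do rewrite inner.
  have h1 (m1 : 'I_n) : \sum_(m2 < n) (if m1 == m2 then \sum_a q a * X a ^+ 2 else 0)
      = \sum_a q a * X a ^+ 2.
    rewrite (bigD1 m1) //= eqxx [\sum_(i < n | i != m1) _]big1 ?addr0 // => j.
    by rewrite eq_sym => /negbTE ->.
  under eq_bigr do rewrite h1.
  by rewrite sumr_const card_ord mulr_natl.
transitivity (\sum_(w : {ffun 'I_n -> A}) \sum_(m1 < n) \sum_(m2 < n)
   \prod_m F m1 m2 m (w m)).
  apply: eq_bigr => w _.
  rewrite expr2 big_distrl /= big_distrr /=; apply: eq_bigr => m1 _.
  rewrite big_distrr /= big_distrr /=; apply: eq_bigr => m2 _.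
  by rewrite -key mulrA.
rewrite exchange_big /=; apply: eq_bigr => m1 _.
by rewrite exchange_big.
Qed.
Lemma fsum_finT (R : realType) (T : finType) (f : T -> R) :
  (\sum_(i \in [set: T]) (f i)%:E = (\sum_(i : T) f i)%:E)%E.
Proof.
rewrite (fsbigE (enum T)) ?enum_uniq //; last first.
  by move=> i _; rewrite mem_enum.
rewrite sumEFin; congr (_%:E).
under eq_bigl do rewrite in_setT.
by rewrite big_enum.
Qed.

Lemma cheb (R : realType) K (p : Alph K -> R) (hp : is_prob_vector p)
  (mu : probability (Sigma K) R) (hmu : is_bernoulli p mu)
  (X : Alph K -> R) (hX0 : \sum_a p a * X a = 0) (n : nat) (c : R) (c0 : 0 < c) :
  (mu [set i : Sigma K | (c < \sum_(m < n) X (i m))%R] <=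
    ((n%:R * \sum_a p a * X a ^+ 2) / c ^+ 2)%:E)%E.
Proof.
set E := [set i : Sigma K | _].
have dE : dep n E.
  move=> i j ij; rewrite /E /=.
  by under eq_bigr => m _ do rewrite (ij m (ltn_ord m)).
have sub : E `<=` \bigcup_(w in [set w : {ffun 'I_n -> Alph K} | E (ext w)]) cyl (ext w) n.
  by rewrite -(dep_cover dE).
apply: le_trans.
  apply: (@content_sub_fsum _ _ _ mu _ _ _ (fun w => cyl (ext w) n) _ _ (dep_meas dE) sub).
    exact: finite_finset.
  by move=> w _; apply: cyl_meas.
have cylE (w : {ffun 'I_n -> Alph K}) : mu (cyl (ext w) n) = (\prod_(m < n) p (w m))%:E.
  by rewrite hmu; under eq_bigr do rewrite extE.
pose S (w : {ffun 'I_n -> Alph K}) := \sum_(m < n) X (w m).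
have SE (w : {ffun 'I_n -> Alph K}) : \sum_(m < n) X (ext w m) = S w.
  by apply: eq_bigr => m _; rewrite extE.
have P0 (w : {ffun 'I_n -> Alph K}) : 0 <= \prod_(m < n) p (w m).
  by apply: prodr_ge0 => m _; apply/ltW; case: hp => + _; apply.
apply: (@le_trans _ _ (\sum_(w \in [set w : {ffun 'I_n -> Alph K} | E (ext w)])
   ((\prod_(m < n) p (w m)) * S w ^+ 2 / c ^+ 2)%:E)%E).
  apply: lee_fsum; first exact: finite_finset.
  move=> w; rewrite /E /= SE => cS; rewrite cylE lee_fin.
  rewrite -mulrA ler_peMr //.
  rewrite ler_pdivlMr ?exprn_gt0 // mul1r.
  by rewrite lerXn2r ?nnegrE ?ltW // (lt_trans c0 cS).
apply: le_trans.
  apply: (@lee_fsum_nneg_subset _ _ _ [set: {ffun 'I_n -> Alph K}]).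
  - exact: finite_finset.
  - exact: finite_finset.
  - by move=> w; rewrite !inE.
  - move=> w _; rewrite lee_fin; apply: mulr_ge0; last by rewrite invr_ge0 sqr_ge0.
    by apply: mulr_ge0 => //; rewrite sqr_ge0.
rewrite fsum_finT lee_fin -mulr_suml /= ler_pM2r ?invr_gt0 ?exprn_gt0 //.
rewrite -(second_moment (q := p)) //; last by case: hp.
Qed.

Lemma limn_esup_le_ev (R : realType) (u : (\bar R)^nat) (a : \bar R) N :
  (forall k, (N <= k)%N -> (u k <= a)%E) -> (limn_esup u <= a)%E.
Proof.
move=> H; rewrite limn_esup_lim; apply: lime_le; first exact: is_cvg_esups.
near=> m; apply: ge_ereal_sup => _ [k /= mk <-]; apply: H.
apply: leq_trans mk; near: m; by exists N.
Unshelve. all: by end_near.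
Qed.

Lemma ln_prodr (R : realType) n (F : 'I_n -> R) : (forall m, 0 < F m) ->
  ln (\prod_(m < n) F m) = \sum_(m < n) ln (F m).
Proof.
elim: n F => [|n IH] F F0; first by rewrite !big_ord0 ln1.
rewrite !big_ord_recr /= lnM ?IH // posrE // prodr_gt0 //.
Qed.

Unset Implicit Arguments.
Set Strict Implicit.

Theorem lemma6p1 (R : realType) (K : nat) (hK : (2 <= K)%N)
  (p : Alph K -> R) (hp : is_prob_vector p) (hnu : non_uniform p)
  (mu : probability (Sigma K) R) (hmu : is_bernoulli p mu)
  (g : nat -> R) (hg1 : forall n, 1 <= g n)
  (hgsup : (limn_esup (fun n => (g n / Num.sqrt (loglog n))%:E) <= 1%:E)%E)
  (hginf : g @ \oo --> +oo) :
  exists nk : nat -> nat, (forall k, (0 < nk k)%N) /\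
    mu [set i : Sigma K |
          (limn_esup (fun k =>
             ((ln (fine (mu (cyl i (nk k)))) + bern_entropy p * (nk k)%:R)
              / (Num.sqrt (2 * bern_variance p * (nk k)%:R) * g (nk k)))%:E)
           <= (2^-1)%:E)%E] = 1%E.
Proof.
have p0 : forall a, 0 < p a by case: hp.
have p1 : \sum_a p a = 1 by case: hp.
pose s1 := \sum_a p a * ln (p a).
have hE : bern_entropy p = - s1 by [].
pose X a := ln (p a) + bern_entropy p.
have hX0 : \sum_a p a * X a = 0.
  rewrite /X; under eq_bigr do rewrite mulrDr.
  by rewrite big_split /= -mulr_suml p1 mul1r hE subrr.
have hX2 : \sum_a p a * X a ^+ 2 = bern_variance p.
  have e a : p a * X a ^+ 2 = p a * ln (p a) ^+ 2 + 2 * bern_entropy p * (p a * ln (p a))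
      + bern_entropy p ^+ 2 * p a by rewrite /X; ring.
  under eq_bigr do rewrite e.
  rewrite !big_split /= -!mulr_sumr p1 /bern_variance hE -/s1; ring.
have [nk hnk] : exists nk : nat -> nat, forall k,
    (0 < nk k)%N /\ 2 * (k.+1)%:R * (2 ^ k.+1)%:R <= g (nk k).
  suff [f hf] : {f & forall k, (0 < f k)%N /\ 2 * (k.+1)%:R * (2 ^ k.+1)%:R <= g (f k)}.
    by exists f.
  apply: (@choice nat nat (fun k n => (0 < n)%N /\ 2 * (k.+1)%:R * (2 ^ k.+1)%:R <= g n)) => k.
  have [N _ HN] := (cvgryPge _).1 hginf (2 * (k.+1)%:R * (2 ^ k.+1)%:R).
  by exists N.+1; split => //; apply: HN => /=.
exists nk; split; first by move=> k; case: (hnk k).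
set rho := bern_variance p.
pose D k := Num.sqrt (2 * rho * (nk k)%:R) * g (nk k).
pose S k (i : Sigma K) := \sum_(m < nk k) X (i m).
have fE k (i : Sigma K) : (ln (fine (mu (cyl i (nk k)))) + bern_entropy p * (nk k)%:R)
    = S k i.
  rewrite hmu /= ln_prodr // /S /X big_split /= sumr_const card_ord mulr_natr //.
set A := [set i : Sigma K | _].
have mA : measurable A.
  have mF := @measurable_fun_limn_esup _ (Sigma K) R setT (fun k (i : Sigma K) =>
     ((ln (fine (mu (cyl i (nk k)))) + bern_entropy p * (nk k)%:R) / D k)%:E).
  have /mF {}mF : forall k, measurable_fun setT (fun (i : Sigma K) =>
     ((ln (fine (mu (cyl i (nk k)))) + bern_entropy p * (nk k)%:R) / D k)%:E).
    move=> k.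
    apply: (@dep_fun_meas K (nk k)) => i j ij; rewrite !fE /S.
    by congr (_ / _)%:E; apply: eq_bigr => m _; rewrite ij.
  have := mF measurableT _ (emeasurable_itv `]-oo, (2^-1)%:E]).
  rewrite setTI; congr measurable; apply/seteqP; split=> i /=; rewrite in_itv /=; done.
have [rho0|rhopos] := leP rho 0.
  rewrite (_ : A = setT) ?probability_setT //; apply/seteqP; split => // i _.
  rewrite /A /=; apply: (@limn_esup_le_ev _ _ _ 0) => k _.
  have -> : Num.sqrt (2 * rho * (nk k)%:R) = 0.
    apply/eqP; rewrite sqrtr_eq0 -mulrA pmulr_rle0 //.
    by rewrite mulr_le0_ge0.
  by rewrite mul0r invr0 mulr0 lee_fin invr_ge0.
have nk0 k : 0 < (nk k)%:R :> R by rewrite ltr0n; case: (hnk k).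
have gb k : 2 * (k.+1)%:R * (2 ^ k.+1)%:R <= g (nk k) by case: (hnk k).
have g0 k : 0 < g (nk k) by apply: lt_le_trans (hg1 _).
have D0 k : 0 < D k.
  by rewrite /D mulr_gt0 // sqrtr_gt0 mulr_gt0 // mulr_gt0.
pose c k := D k / 2.
have c0 k : 0 < c k by rewrite /c divr_gt0.
pose E k := [set i : Sigma K | (c k < \sum_(m < nk k) X (i m))%R].
have mE k : measurable (E k).
  apply: (@dep_meas K (nk k)) => i j ij; rewrite /E /=.
  by under eq_bigr => m _ do rewrite (ij _ (ltn_ord m)).
have muE k : (mu (E k) <= ((k.+1%:R)^-1 / (2 ^ k.+1)%:R)%:E)%E.
  apply: le_trans (cheb (X := X) hp hmu hX0 (nk k) (c0 k)) _.
  rewrite lee_fin hX2 -/rho.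
  have Dsq : D k ^+ 2 = 2 * rho * (nk k)%:R * g (nk k) ^+ 2.
    by rewrite /D exprMn sqr_sqrtr // ltW // mulr_gt0 // mulr_gt0.
  have -> : (nk k)%:R * rho / c k ^+ 2 = 2 / g (nk k) ^+ 2.
    rewrite /c expr_div_n Dsq; field.
    by rewrite !lt0r_neq0.
  have -> : (k.+1%:R)^-1 / (2 ^ k.+1)%:R = 2 / (2 * (k.+1)%:R * (2 ^ k.+1)%:R) :> R.
    by field; rewrite ?lt0r_neq0 ?ltr0n ?expn_gt0.
  rewrite ler_pM2l // lef_pV2 ?posrE ?exprn_gt0 ?mulr_gt0 ?ltr0n ?expn_gt0 //.
  apply: le_trans (gb k) _.
  by rewrite expr2 ler_peMl // ltW.
have Acomp N : ~` A `<=` \bigcup_(k in ~` `I_N) E k.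
  move=> i nAi; apply: contrapT => nU; apply: nAi.
  rewrite /A /=; apply: (@limn_esup_le_ev _ _ _ N) => k Nk.
  have nE : ~ E k i.
    move=> Eki; apply: nU; exists k => //=.
    by rewrite /= ltnNge Nk.
  rewrite fE lee_fin -/(D k).
  have : S k i <= c k by rewrite leNgt; apply/negP.
  by move=> h; rewrite ler_pdivrMr // mulrC.
have bnd M : (mu (~` A) <= (M.+1%:R^-1)%:E)%E.
  apply: le_trans (measure_sigma_subadditive_tail mu mE (measurableC mA) (Acomp M)) _.
  rewrite eseries_cond.
  apply: le_trans; last apply: (@epsilon_trick0 _ (M.+1%:R^-1) (fun i => true && (M <= i)%N)).
    apply: lee_nneseries => // n /andP[_ Mn].
    apply: le_trans (muE n) _; rewrite lee_fin ler_pM2r ?invr_gt0 ?ltr0n ?expn_gt0 //.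
    by rewrite lef_pV2 ?posrE ?ltr0n // ler_nat.
  by rewrite invr_ge0.
have fin : mu A \is a fin_num by apply: fin_num_measure.
have x1 : fine (mu A) <= 1.
  by rewrite -lee_fin fineK //; apply: probability_le1.
suff h1 : fine (mu A) = 1 by rewrite -(fineK fin) h1.
apply/eqP; rewrite eq_le x1 /=.
rewrite leNgt; apply/negP => lt.
have [k hk] := ltr_add_invr lt.
have := bnd k; rewrite probability_setC // -(fineK fin) -EFinB lee_fin => h.
move: hk h; set x := fine (mu A); set e := k.+1%:R^-1 => hk h.
have : x + e < x + e by apply: lt_le_trans hk _; move: h; rewrite lerBlDl.
by rewrite ltxx.
Qed.
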